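(* In the setting below, for every mask $m\in\{0,1\}^{|\mathrm H|}$, $$\Delta\mathcal L\le\sum_{h=1}^{|\mathrm H|}(1-m_h)\,\mathrm{HIS}_h+\frac{c}{2}\,\|W^O\|_2^2\sum_{h=1}^{|\mathrm H|}(1-m_h)\,\mathbb E_{x\sim\mathcal D}\bigl[\|A_h(x)\|_F^2\bigr],$$ with $c=\tfrac14$ if $\ell$ is binary (sigmoid) cross-entropy (so the coefficient is $\tfrac18\|W^O\|_2^2$) and $c=\tfrac12$ if $\ell$ is multiclass softmax cross-entropy (so the coefficient is $\tfrac14\|W^O\|_2^2$).
   Context: Setting: a multi-head attention layer with $|\mathrm H|$ heads; for each input $x\sim\mathcal D$, head $h$ outputs $A_h(x)\in\mathbb R^{n\times d_v}$ over $n$ tokens and $\mathbf y(x)=\operatorname{Concat}(A_1(x),\dots,A_{|\mathrm H|}(x))\in\mathbb R^{n\times d}$, $d=|\mathrm H|d_v$. For a mask $m\in\{0,1\}^{|\mathrm H|}$, $\mathbf y_m(x)=\operatorname{Concat}(m_1A_1(x),\dots,m_{|\mathrm H|}A_{|\mathrm H|}(x))$. The loss is $\mathcal L(x,\mathbf y)=\frac1n\sum_{t=1}^n\ell\bigl(\mathbf y(t)W^O;c_t(x)\bigr)$, where $\mathbf y(t)$ is the $t$-th row, $W^O\in\mathbb R^{d\times C}$ is a fixed output projection ($C=1$ in the binary case), $c_t(x)$ are labels and $\ell$ is binary cross-entropy $\ell(z;c)=-c\log\sigma(z)-(1-c)\log(1-\sigma(z))$ or multiclass cross-entropy $\ell(\mathbf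 z;c)=-\log\mathrm{softmax}(\mathbf z)_c$. Token-averaged Frobenius inner product/norm: $\langle U,V\rangle_F=\frac1n\sum_{i}\langle U(i),V(i)\rangle$, $\|U\|_F^2=\langle U,U\rangle_F$. $\mathrm{HIS}_h=\mathbb E_{x\sim\mathcal D}|\langle\nabla_{A_h}\mathcal L(x,\mathbf y(x)),A_h(x)\rangle_F|$ (gradient w.r.t. the token-averaged inner product), $\Delta\mathcal L=\mathbb E_{x\sim\mathcal D}[\mathcal L(x,\mathbf y_m(x))-\mathcal L(x,\mathbf y(x))]$; all expectations assumed finite. $\|W^O\|_2$ is the spectral norm. *)

(* Defs.v *)
From HB Require Import structures.
From mathcomp Require Import all_boot all_order all_algebra.
From mathcomp Require Import all_classical all_reals all_analysis.
Set Implicit Arguments. Unset Strict Implicit. Unset Printing Implicit Defensive.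
Import Order.TTheory GRing.Theory Num.Theory.
Local Open Scope ring_scope.
Local Open Scope classical_set_scope.

Section Defs.
Variable R : realType.

Definition sigm (z : R) : R := (1 + expR (- z))^-1.

Definition bce (z : 'rV[R]_1) (c : bool) : R :=
  - ((c%:R) * ln (sigm (z 0 0))) - (1 - c%:R) * ln (1 - sigm (z 0 0)).

Definition ce (C : nat) (z : 'rV[R]_C) (c : 'I_C) : R :=
  - ln (expR (z 0 c) / \sum_(j < C) expR (z 0 j)).

(* the two admissible losses together with their constant c *)
Inductive xent_loss : forall (C : nat) (Lab : Type), ('rV[R]_C -> Lab -> R) -> R -> Prop :=
| xent_binary : xent_loss bce (4^-1)
| xent_multi (C : nat) : xent_loss (@ce C) (2^-1).

Definition vnorm (k : nat) (v : 'rV[R]_k) : R := Num.sqrt (\sum_(j < k) v 0 j ^+ 2).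
Definition specnorm (d C : nat) (W : 'M[R]_(d, C)) : R :=
  sup [set r : R | exists v : 'rV[R]_d, vnorm v = 1 /\ r = vnorm (v *m W)].

Definition frob_inner (n k : nat) (U V : 'M[R]_(n, k)) : R :=
  (n%:R)^-1 * \sum_(i < n) \sum_(j < k) U i j * V i j.
Definition frob_norm2 (n k : nat) (U : 'M[R]_(n, k)) : R := frob_inner U U.

(* masked concatenation of heads: row t is Concat(m_1 A_1(t), ..., m_H A_H(t)) *)
Definition concat_mask (n nH dv : nat) (m : 'I_nH -> bool)
  (A : 'I_nH -> 'M[R]_(n, dv)) : 'M[R]_(n, nH * dv) :=
  \matrix_(t < n) mxvec (\matrix_(h < nH, k < dv) ((m h)%:R * A h t k)).

Definition concat (n nH dv : nat) (A : 'I_nH -> 'M[R]_(n, dv)) : 'M[R]_(n, nH * dv) :=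
  concat_mask (fun _ => true) A.

Definition loss (n d C : nat) (Lab : Type) (ell : 'rV[R]_C -> Lab -> R)
  (W : 'M[R]_(d, C)) (c : 'I_n -> Lab) (Y : 'M[R]_(n, d)) : R :=
  (n%:R)^-1 * \sum_(t < n) ell (row t Y *m W) (c t).

Definition perturb (n nH dv : nat) (A : 'I_nH -> 'M[R]_(n, dv)) (h : 'I_nH)
  (i : 'I_n) (k : 'I_dv) (s : R) : 'I_nH -> 'M[R]_(n, dv) :=
  fun h' => if h' == h then A h + s *: delta_mx i k else A h'.

(* gradient of L(x, Concat(A_1..A_H)) w.r.t. A_h, taken with respect to the
   token-averaged inner product: G(i,k) = n * dL/dA_h(i,k) *)
Definition grad_head (n nH dv C : nat) (Lab : Type) (ell : 'rV[R]_C -> Lab -> R)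
  (W : 'M[R]_(nH * dv, C)) (c : 'I_n -> Lab) (A : 'I_nH -> 'M[R]_(n, dv))
  (h : 'I_nH) : 'M[R]_(n, dv) :=
  \matrix_(i < n, k < dv)
    (n%:R * derive1 (fun s : R => loss ell W c (concat (perturb A h i k s))) 0).

End Defs.

(* Main.v *)
Require Import Defs.
From HB Require Import structures.
From mathcomp Require Import all_boot all_order all_algebra.
From mathcomp Require Import all_classical all_reals all_analysis.
From mathcomp.algebra_tactics Require Import ring lra.
Import Order.TTheory GRing.Theory Num.Theory.
Import numFieldNormedType.Exports.
Local Open Scope ring_scope.
Local Open Scope classical_set_scope.

Set Implicit Arguments. Unset Strict Implicit. Unset Printing Implicit Defensive.
Section Calc.
Variable R : realType.

Lemma mono_of_deriv (f df : R -> R) :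
  (forall x : R, is_derive x (1:R) f (df x)) -> (forall x, 0 <= df x) ->
  forall a b, a <= b -> f a <= f b.
Proof.
move=> Hd Hpos a b ab.
have [|c _ E] := MVT_segment ab (fun x _ => Hd x).

  apply: continuous_subspaceT => r.
  by apply/differentiable_continuous/derivable1_diffP; case: (Hd r).
by rewrite -subr_ge0 E mulr_ge0 // subr_ge0.
Qed.

Lemma taylor2 (f f1 f2 : R -> R) (K : R) :
  (forall x : R, is_derive x (1:R) f (f1 x)) ->
  (forall x : R, is_derive x (1:R) f1 (f2 x)) ->
  (forall x, f2 x <= K) ->
  forall h, f h <= f 0 + f1 0 * h + K / 2 * h ^+ 2.
Proof.
move=> Hf Hf1 HK h.
have sE (a b : R) : a *: b = a * b by [].
pose g1 : R -> R := (K \*: (id : R -> R) + cst (f1 0)) - f1.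
have Dg1 (x : R) : is_derive x (1:R) g1 (K - f2 x).
  rewrite /g1; apply: is_derive_eq.
  by rewrite addr0; congr (_ - _); exact: mulr1.
have g1m := mono_of_deriv Dg1 (fun x => (ltac:(by rewrite subr_ge0; exact: HK)) : 0 <= K - f2 x).
have g1E x : g1 x = K * x + f1 0 - f1 x by [].
have g10 : g1 0 = 0 by rewrite g1E mulr0 add0r subrr.
pose g : R -> R := (K / 2) \*: ((id : R -> R) * id) + f1 0 \*: (id : R -> R) + cst (f 0) - f.
have Dg (x : R) : is_derive x (1:R) g (g1 x).
  rewrite /g; apply: is_derive_eq.
  have e (a b : R) : a / 2 * (b + b) = a * b by field.
  by rewrite g1E !sE !mulr1 e addr0.
have gE x : g x = K / 2 * (x * x) + f1 0 * x + f 0 - f x by [].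
suff : 0 <= g h by rewrite gE subr_ge0 expr2; lra.
have g0 : g 0 = 0 by rewrite gE !mulr0 !add0r subrr.
have [hp|hn] := leP 0 h.
  have [|c /andP[c0 ch] E] := MVT_segment hp (fun x _ => Dg x).
    apply: continuous_subspaceT => r.
    by apply/differentiable_continuous/derivable1_diffP; case: (Dg r).
  move: E; rewrite g0 subr0 => ->.
  apply: mulr_ge0; last by rewrite subr0.
  by rewrite -[X in X <= _]g10; exact: g1m.
have [|c /andP[c0 ch] E] := MVT_segment (ltW hn) (fun x _ => Dg x).
  apply: continuous_subspaceT => r.
  by apply/differentiable_continuous/derivable1_diffP; case: (Dg r).
have -> : g h = g1 c * h.
  by move: E; rewrite g0 sub0r => /eqP; rewrite eqr_oppLR => /eqP ->; rewrite sub0r mulrN opprK.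
apply: mulr_le0; last exact: ltW.
by rewrite -[X in _ <= X]g10; exact: g1m.
Qed.

Lemma hoeff2 (q h : R) : 0 <= q <= 1 ->
  ln (1 - q + q * expR h) <= q * h + h ^+ 2 / 8.
Proof.
move=> /andP[q0 q1].
have sE (a b : R) : a *: b = a * b by [].
pose D : R -> R := cst (1 - q) + q \*: expR.
have DE x : D x = 1 - q + q * expR x by [].
have Dpos x : 0 < D x.
  rewrite DE; have ex := expR_gt0 x.
  have [q1'|q1'] := ltP q 1; first by have := mulr_ge0 q0 (ltW ex); lra.
  have -> : q = 1 by lra.
  by rewrite subrr add0r mul1r.
have DD x : is_derive x (1:R) D (q * expR x).
  by apply: is_derive_eq; rewrite add0r sE.
pose f : R -> R := (@ln R) \o D.
have Df x : is_derive x (1:R) f ((D x)^-1 * (q * expR x)).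
  exact: is_derive1_comp (is_derive1_ln (Dpos x)) (DD x).
pose Di : R -> R := fun y => (D y)^-1.
have DDi x : is_derive x (1:R) Di (- (D x) ^- 2 *: (q * expR x)).
  by apply: is_deriveV; try exact: DD; rewrite gt_eqF.
pose f1 : R -> R := Di * (q \*: expR).
have Df1 x : is_derive x (1:R) f1 (Di x *: (q * expR x) + (q * expR x) *: (- (D x) ^- 2 *: (q * expR x))).
  have H1 := is_deriveM (DDi x) (is_deriveZ q (is_derive_expR x)).
  by apply: is_derive_eq.
have Hb x : Di x *: (q * expR x) + (q * expR x) *: (- D x ^- 2 *: (q * expR x)) <= 4^-1.
  rewrite !sE.
  set r := (D x)^-1 * (q * expR x).
  have -> : Di x * (q * expR x) + q * expR x * (- D x ^- 2 * (q * expR x)) = r - r ^+ 2.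
    by rewrite /r /Di exprMn exprVn; ring.
  have := sqr_ge0 (r - 2^-1); rewrite expr2 => H2.
  have -> : (4^-1 : R) = 2^-1 * 2^-1 by field.
  nra.
have H := taylor2 Df Df1 Hb h.
have f0 : f 0 = 0 by rewrite /f /= DE expR0 mulr1 subrK ln1.
have e0 : (D 0)^-1 * (q * expR 0) = q by rewrite DE expR0 mulr1 subrK invr1 mul1r.
rewrite f0 e0 add0r in H.
have -> : (h ^+ 2 / 8 : R) = 4^-1 / 2 * h ^+ 2 by field.
exact: H.
Qed.

Lemma sum_affine (I : finType) (p v : I -> R) (al be : R) :
  \sum_i p i = 1 ->
  \sum_i p i * (al + be * v i) = al + be * \sum_i p i * v i.
Proof.
move=> p1.
rewrite (eq_bigr (fun i => al * p i + be * (p i * v i))); last first.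
  by move=> i _; ring.
by rewrite big_split /= -!mulr_sumr p1 mulr1.
Qed.

Lemma jensen_exp (I : finType) (p v : I -> R) :
  (forall i, 0 <= p i) -> \sum_i p i = 1 ->
  expR (\sum_i p i * v i) <= \sum_i p i * expR (v i).
Proof.
move=> p0 p1; set mu := \sum_i p i * v i.
have H i : p i * (expR mu * (1 - mu + v i)) <= p i * expR (v i).
  apply: ler_wpM2l => //.
  have H := ler_wpM2l (expR_ge0 mu) (expR_ge1Dx (v i - mu)).
  have E : expR mu * expR (v i - mu) = expR (v i).
    by rewrite -expRD; congr expR; ring.
  rewrite E in H.
  by apply: le_trans H; rewrite le_eqVlt; apply/orP; left; apply/eqP; ring.
apply: le_trans (ler_sum _ (fun i _ => H i)).
rewrite (eq_bigr (fun i => p i * (expR mu * (1 - mu) + expR mu * v i))); last first.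
  by move=> i _; congr (_ * _); ring.
by rewrite sum_affine // -/mu -mulrDr subrK mulr1.
Qed.

Lemma exp_chord (a b y : R) : a < b -> a <= y <= b ->
  expR y <= ((b - y) * expR a + (y - a) * expR b) / (b - a).
Proof.
move=> ab /andP[ay yb].
rewrite ler_pdivlMr ?subr_gt0 //.
have Ha := expR_ge1Dx (a - y); have Hb := expR_ge1Dx (b - y).
have Ea : expR a = expR y * expR (a - y) by rewrite -expRD; congr expR; ring.
have Eb : expR b = expR y * expR (b - y) by rewrite -expRD; congr expR; ring.
rewrite Ea Eb.
have ey := expR_gt0 y.
have h1 : 0 <= b - y by rewrite subr_ge0.
have h2 : 0 <= y - a by rewrite subr_ge0.
have k1 := ler_wpM2l (mulr_ge0 h1 (ltW ey)) Ha.
have k2 := ler_wpM2l (mulr_ge0 h2 (ltW ey)) Hb.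
nra.
Qed.

Lemma hoeffding_fin (I : finType) (p v : I -> R) (a b : R) :
  (forall i, 0 <= p i) -> \sum_i p i = 1 -> (forall i, a <= v i <= b) ->
  \sum_i p i * expR (v i) <= expR (\sum_i p i * v i + (b - a) ^+ 2 / 8).
Proof.
move=> p0 p1 vab; set mu := \sum_i p i * v i.
have muab : a <= mu <= b.
  have -> : mu = \sum_i p i * (0 + 1 * v i).
    by apply: eq_bigr => i _; rewrite add0r mul1r.
  rewrite sum_affine // add0r mul1r.
  apply/andP; split.
    rewrite -[a]mul1r -p1 mulr_suml; apply: ler_sum => i _.
    by apply: ler_wpM2l => //; case/andP: (vab i).
  rewrite -[b]mul1r -p1 mulr_suml; apply: ler_sum => i _.
  by apply: ler_wpM2l => //; case/andP: (vab i).
have [ab|ba] := ltP a b; last first.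
  have ve i : v i = a by case/andP: (vab i) => h1 h2; apply/eqP; rewrite eq_le h1 (le_trans h2 ba).
  have mue : mu = a by move/andP: muab => [h1 h2]; apply/eqP; rewrite eq_le h1 (le_trans h2 ba).
  rewrite (eq_bigr (fun i => p i * expR a)); last by move=> i _; rewrite ve.
  rewrite -mulr_suml p1 mul1r mue ler_expR lerDl.
  by apply: mulr_ge0 => //; apply: sqr_ge0.
pose q := (mu - a) / (b - a).
have ba0 : 0 < b - a by rewrite subr_gt0.
have q01 : 0 <= q <= 1.
  move/andP: muab => [h1 h2].
  apply/andP; split; first by apply: divr_ge0; rewrite subr_ge0 // ltW.
  by rewrite ler_pdivrMr // mul1r; lra.
apply: (@le_trans _ _ (\sum_i p i * (((b * expR a - a * expR b) / (b - a)) + ((expR b - expR a) / (b - a)) * v i))).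
  apply: ler_sum => i _; apply: ler_wpM2l => //.
  apply: le_trans (exp_chord ab (vab i)) _.
  rewrite le_eqVlt; apply/orP; left; apply/eqP; field.
  by rewrite gt_eqF.
rewrite sum_affine // -/mu.
have H := hoeff2 (b - a) q01.
have Hpos : 0 < 1 - q + q * expR (b - a).
  have := expR_gt0 (b - a); move/andP: q01 => [h1 h2].
  move=> ex; nra.
have H' : 1 - q + q * expR (b - a) <= expR (q * (b - a) + (b - a) ^+ 2 / 8).
  by rewrite -ler_ln ?posrE ?expR_gt0 // expRK.
have E : (b * expR a - a * expR b) / (b - a) + (expR b - expR a) / (b - a) * mu
   = expR a * (1 - q + q * expR (b - a)).
  by rewrite /q expRB; field; rewrite gt_eqF ?expR_gt0 // gt_eqF.
rewrite E.
have E2 : expR (mu + (b - a) ^+ 2 / 8) = expR a * expR (q * (b - a) + (b - a) ^+ 2 / 8).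
  by rewrite -expRD; congr expR; rewrite /q; field; rewrite gt_eqF.
rewrite E2; apply: ler_wpM2l => //; exact: expR_ge0.
Qed.

Lemma exists_minmax (C : nat) (c : 'I_C) (u : 'I_C -> R) :
  exists j1 j2, forall k, u j1 <= u k <= u j2.
Proof.
case: (@Order.TotalTheory.arg_minP _ _ _ c xpredT u) => // j1 _ H1.
case: (@Order.TotalTheory.arg_maxP _ _ _ c xpredT u) => // j2 _ H2.
by exists j1, j2 => k; apply/andP; split; [exact: H1|exact: H2].
Qed.

Lemma two_point_lower (q h : R) : 0 <= q <= 1 -> expR (q * h) <= 1 - q + q * expR h.
Proof.
move=> /andP[q0 q1].
have e := expR_gt0 (q * h).
have H1 := ler_wpM2l (ltW e) (expR_ge1Dx (- (q * h))).
have H2 := ler_wpM2l (ltW e) (expR_ge1Dx (h - q * h)).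
have E1 : expR (q * h) * expR (- (q * h)) = 1 by rewrite -expRD subrr expR0.
have E2 : expR (q * h) * expR (h - q * h) = expR h by rewrite -expRD; congr expR; ring.
rewrite E1 in H1; rewrite E2 in H2.
have q1' : 0 <= 1 - q by lra.
have k1 := ler_wpM2l q1' H1.
have k2 := ler_wpM2l q0 H2.
nra.
Qed.

Lemma bceE (z : 'rV[R]_1) (c : bool) :
  bce z c = ln (1 + expR (- z 0 0)) + (1 - c%:R) * z 0 0.
Proof.
rewrite /bce /sigm; set x := z 0 0; set E := expR (- x).
have E0 : 0 < E by exact: expR_gt0.
have T0 : 0 < 1 + E by lra.
have -> : 1 - (1 + E)^-1 = E / (1 + E) by field; rewrite gt_eqF.
rewrite lnV ?posrE // ln_div ?posrE // /E expRK.
ring.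
Qed.

Lemma ceE (C : nat) (z : 'rV[R]_C) (c : 'I_C) :
  ce z c = ln (\sum_j expR (z 0 j)) - z 0 c.
Proof.
rewrite /ce ln_div ?posrE ?expR_gt0 ?expRK //; first by rewrite opprB addrC.
rewrite (bigD1 c) //=; apply: ltr_pwDl; first exact: expR_gt0.
by apply: sumr_ge0 => i _; exact: expR_ge0.
Qed.

Lemma sum_sq2 (C : nat) (u : 'I_C -> R) (j1 j2 : 'I_C) :
  (u j2 - u j1) ^+ 2 <= 2 * \sum_j u j ^+ 2.
Proof.
have [e|ne] := eqVneq j1 j2.
  rewrite e subrr expr0n /=; apply: mulr_ge0 => //; apply: sumr_ge0 => i _; exact: sqr_ge0.
have H : u j1 ^+ 2 + u j2 ^+ 2 <= \sum_j u j ^+ 2.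
  rewrite (bigD1 j1) //= (bigD1 j2) /=; last by rewrite eq_sym.
  rewrite addrA lerDl; apply: sumr_ge0 => i _; exact: sqr_ge0.
have := sqr_ge0 (u j1 + u j2); rewrite !expr2 in H * => H2.
nra.
Qed.

Lemma xent_smooth (C : nat) (Lab : Type) ell cst :
  @xent_loss R C Lab ell cst ->
  0 <= cst /\ exists g : 'rV[R]_C -> Lab -> 'rV[R]_C, forall z c u,
    0 <= ell (z + u) c - ell z c - \sum_j g z c 0 j * u 0 j /\
    ell (z + u) c - ell z c - \sum_j g z c 0 j * u 0 j <= cst / 2 * \sum_j u 0 j ^+ 2.
Proof.
case.
- split; first by rewrite invr_ge0.
  exists (fun z c => \row_(j < 1) (1 - c%:R - expR (- z 0 0) / (1 + expR (- z 0 0)))).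
  move=> z c u; rewrite !bceE !big_ord1 !mxE.
  set x := z 0 0; set w := u 0 0; set E := expR (- x).
  have E0 : 0 < E by exact: expR_gt0.
  set p := E / (1 + E).
  have p01 : 0 <= p <= 1.
    apply/andP; split; first by apply: divr_ge0; lra.
    by rewrite ler_pdivrMr ?mul1r; lra.
  have ew := expR_gt0 (- w).
  have -> : expR (- (x + w)) = E * expR (- w) by rewrite -expRD opprD.
  have Q0 : 0 < 1 - p + p * expR (- w).
    move/andP: p01 => [h1 h2]; nra.
  have hQ : ln (1 + E * expR (- w)) - ln (1 + E) = ln (1 - p + p * expR (- w)).
    rewrite -ln_div ?posrE; [|nra|lra].
    by congr ln; rewrite /p; field; rewrite gt_eqF //; lra.
  have -> : ln (1 + E * expR (- w)) + (1 - c%:R) * (x + w) -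
      (ln (1 + E) + (1 - c%:R) * x) - (1 - c%:R - p) * w
      = ln (1 - p + p * expR (- w)) + p * w.
    by rewrite -hQ; ring.
  split.
    have := two_point_lower (- w) p01.
    rewrite -ler_ln ?posrE ?expR_gt0 // expRK; lra.
  have := hoeff2 (- w) p01.
  have -> : (4^-1 / 2 : R) = 8^-1 by field.
  rewrite sqrrN; lra.
- move=> C'; split; first by rewrite invr_ge0.
  exists (fun z c => \row_j (expR (z 0 j) / (\sum_k expR (z 0 k)) - (j == c)%:R)).
  move=> z c u; rewrite !ceE.
  set S := \sum_k expR (z 0 k).
  have S0 : 0 < S.
    rewrite /S (bigD1 c) //=; apply: ltr_pwDl; first exact: expR_gt0.
    by apply: sumr_ge0 => i _; exact: expR_ge0.
  pose p j := expR (z 0 j) / S.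
  have p0 j : 0 <= p j by apply: divr_ge0; [exact: expR_ge0 | exact: ltW].
  have p1 : \sum_j p j = 1 by rewrite /p -mulr_suml -/S divff // gt_eqF.
  have eS : \sum_j expR ((z + u) 0 j) = S * \sum_j p j * expR (u 0 j).
    rewrite mulr_sumr; apply: eq_bigr => j _; rewrite mxE expRD /p; field.
    by rewrite gt_eqF.
  have Q0 : 0 < \sum_j p j * expR (u 0 j).
    rewrite (bigD1 c) //=; apply: ltr_pwDl.
      by apply: mulr_gt0; [apply: divr_gt0 => //; exact: expR_gt0 | exact: expR_gt0].
    by apply: sumr_ge0 => i _; apply: mulr_ge0 => //; exact: expR_ge0.
  have eg : \sum_j (\row_j (expR (z 0 j) / S - (j == c)%:R)) 0 j * u 0 j
          = \sum_j p j * u 0 j - u 0 c.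
    rewrite (eq_bigr (fun j => p j * u 0 j - (j == c)%:R * u 0 j)); last first.
      by move=> j _; rewrite mxE mulrBl.
    rewrite sumrB; congr (_ - _).
    rewrite (bigD1 c) //= eqxx mul1r big1 ?addr0 // => j /negbTE ->; exact: mul0r.
  rewrite eg eS lnM ?posrE // mxE.
  have -> : ln S + ln (\sum_j p j * expR (u 0 j)) - (z 0 c + u 0 c) - (ln S - z 0 c)
      - (\sum_j p j * u 0 j - u 0 c)
      = ln (\sum_j p j * expR (u 0 j)) - \sum_j p j * u 0 j by ring.
  split.
    have := jensen_exp (u 0) p0 p1.
    rewrite -ler_ln ?posrE ?expR_gt0 // expRK; lra.
  have [j1 [j2 Hj]] := exists_minmax c (u 0).
  have := hoeffding_fin p0 p1 Hj.
  rewrite -ler_ln ?posrE ?expR_gt0 // expRK => H.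
  have := sum_sq2 (u 0) j1 j2.
  have -> : (2^-1 / 2 : R) = 4^-1 by field.
  lra.
Qed.
End Calc.


Section Lin.
Variable R : realType.

Lemma sumsq_ge0 (k : nat) (v : 'I_k -> R) : 0 <= \sum_j v j ^+ 2.
Proof. by apply: sumr_ge0 => i _; exact: sqr_ge0. Qed.

Lemma specnorm_sq (d C : nat) (W : 'M[R]_(d, C)) (v : 'rV[R]_d) :
  \sum_j (v *m W) 0 j ^+ 2 <= specnorm W ^+ 2 * \sum_i v 0 i ^+ 2.
Proof.
set S := [set r : R | exists v : 'rV[R]_d, vnorm v = 1 /\ r = vnorm (v *m W)].
pose M2 := \sum_(j < C) (\sum_(i < d) `|W i j|) ^+ 2.
have ub : has_ubound S.
  exists (Num.sqrt M2) => r [w [w1 ->]].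
  rewrite /vnorm ler_sqrt; last by apply: sumr_ge0 => j _; exact: sqr_ge0.
  have w1' : \sum_j w 0 j ^+ 2 = 1.
    by rewrite -(sqr_sqrtr (sumsq_ge0 (w 0))) -/(vnorm w) w1 expr1n.
  apply: ler_sum => j _.
  have wi i : `|w 0 i| <= 1.
    have : w 0 i ^+ 2 <= 1.
      rewrite -w1' (bigD1 i) //= lerDl; apply: sumr_ge0 => l _; exact: sqr_ge0.
    move=> h; rewrite ler_norml; apply/andP; split; nra.
  have hx : `|(w *m W) 0 j| <= \sum_i `|W i j|.
    rewrite mxE; apply: le_trans (ler_norm_sum _ _ _) _.
    apply: ler_sum => i _; rewrite normrM.
    by rewrite -[X in _ <= X]mul1r; apply: ler_wpM2r => //.
  have B0 : 0 <= \sum_i `|W i j| by apply: sumr_ge0 => i _.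
  rewrite -(real_normK (num_real ((w *m W) 0 j))).
  by apply: lerXn2r => //; rewrite nnegrE.
set s := \sum_i v 0 i ^+ 2.
have [s0|s0] := eqVneq s 0.
  have v0 : v = 0.
    apply/rowP => i; rewrite mxE; apply/eqP; rewrite -sqrf_eq0 eq_le sqr_ge0 andbT.
    by rewrite -s0 /s (bigD1 i) //= lerDl; apply: sumr_ge0 => l _; exact: sqr_ge0.
  rewrite v0 mul0mx s0 mulr0 (eq_bigr (fun _ => 0)) ?big1 // => j _.
  by rewrite mxE expr0n.
have sp : 0 < s by rewrite lt_def s0 sumsq_ge0.
pose k := (Num.sqrt s)^-1.
have sq0 : 0 < Num.sqrt s by rewrite sqrtr_gt0.
have k2 : k ^+ 2 * s = 1 by rewrite /k exprVn sqr_sqrtr ?mulVf // ltW.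
have inS : S (vnorm ((k *: v) *m W)).
  exists (k *: v); split => //.
  rewrite /vnorm (eq_bigr (fun i => k ^+ 2 * v 0 i ^+ 2)); last first.
    by move=> i _; rewrite mxE exprMn.
  by rewrite -mulr_sumr -/s k2 sqrtr1.
have H := ub_le_sup ub inS.
have H2 : vnorm ((k *: v) *m W) ^+ 2 <= specnorm W ^+ 2.
  apply: lerXn2r => //; rewrite ?nnegrE ?sqrtr_ge0 //.
  exact: le_trans (sqrtr_ge0 _) H.
rewrite /vnorm sqr_sqrtr ?sumsq_ge0 // in H2.
rewrite (eq_bigr (fun j => k ^+ 2 * (v *m W) 0 j ^+ 2)) in H2; last first.
  by move=> j _; rewrite -scalemxAl mxE exprMn.
rewrite -mulr_sumr in H2.
have := ler_wpM2r (ltW sp) H2.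
rewrite mulrAC k2 mul1r.
done.
Qed.

Lemma deriv_sq (phi : R -> R) (a K : R) : 0 <= K ->
  (forall s, `|phi s - phi 0 - s * a| <= K * s ^+ 2) -> derive1 phi 0 = a.
Proof.
move=> K0 H; rewrite /derive1; apply: cvg_lim => //.
apply/cvgrPdist_lt => e e0.
have e1 : 0 < e / (K + 1) by apply: divr_gt0 => //; lra.
near=> h.
have hn : h != 0 by near: h; exact: nbhs_dnbhs_neq.
have hl : `|h| < e / (K + 1) by near: h; exact: dnbhs0_lt.
rewrite addr0.
have -> : a - h^-1 *: (phi h - phi 0) = - (h^-1 * (phi h - phi 0 - h * a)).
  by rewrite /GRing.scale /=; field.
rewrite normrN normrM normfV.
have hp : 0 < `|h| by rewrite normr_gt0.
rewrite ltr_pdivrMl //.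
apply: le_lt_trans (H h) _.
rewrite -(real_normK (num_real h)).
have K1 : 0 < K + 1 by lra.
rewrite ltr_pdivlMr // in hl.
rewrite expr2; nra.
Unshelve. all: by end_near.
Qed.

Lemma sum_mxvec (p q : nat) (F : 'I_(p * q) -> R) :
  \sum_idx F idx = \sum_(h < p) \sum_(k < q) F (mxvec_index h k).
Proof.
rewrite (reindex (uncurry (@mxvec_index p q))); last exact: curry_mxvec_bij.
by rewrite pair_big /=; apply: eq_bigr => -[h k].
Qed.

Lemma concat_maskE (n nH dv : nat) (m : 'I_nH -> bool) (A : 'I_nH -> 'M[R]_(n, dv))
  t h k : concat_mask m A t (mxvec_index h k) = (m h)%:R * A h t k.
Proof. by rewrite /concat_mask !mxE mxvecE mxE. Qed.

Lemma sum_ind (I : finType) (h : I) (F : I -> R) : \sum_i (i == h)%:R * F i = F h.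
Proof.
rewrite (bigD1 h) //= eqxx mul1r big1 ?addr0 // => i /negbTE ->; exact: mul0r.
Qed.

Lemma row_pert (n nH dv C : nat) (W : 'M[R]_(nH * dv, C)) (A : 'I_nH -> 'M[R]_(n, dv))
  h i k s t :
  row t (concat (perturb A h i k s)) *m W =
  row t (concat A) *m W + (s * (t == i)%:R) *: row (mxvec_index h k) W.
Proof.
apply/rowP => j; rewrite !mxE.
under eq_bigr do rewrite mxE.
under [X in _ = X + _]eq_bigr do rewrite mxE.
rewrite !sum_mxvec.
have E h' k' : concat (perturb A h i k s) t (mxvec_index h' k') * W (mxvec_index h' k') j =
   concat A t (mxvec_index h' k') * W (mxvec_index h' k') j +
   (h' == h)%:R * ((k' == k)%:R * (s * (t == i)%:R * W (mxvec_index h' k') j)).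
  rewrite /concat !concat_maskE /perturb !mul1r.
  have [->|hne] := eqVneq h' h.
    rewrite !mxE; have [->|kne] := eqVneq k' k.
      by rewrite ?eqxx ?andbT /=; ring.
    by rewrite ?andbF /=; ring.
  by rewrite mul0r addr0.
under eq_bigr do under eq_bigr do rewrite E.
rewrite (eq_bigr (fun h' => \sum_k' concat A t (mxvec_index h' k') * W (mxvec_index h' k') j
   + (h' == h)%:R * \sum_k' ((k' == k)%:R * (s * (t == i)%:R * W (mxvec_index h' k') j)))).
  by rewrite big_split /= sum_ind sum_ind.
by move=> h' _; rewrite big_split /= mulr_sumr.
Qed.

Lemma grad_val (n nH dv C : nat) (Lab : Type) (ell : 'rV[R]_C -> Lab -> R)
  (W : 'M[R]_(nH * dv, C)) (c : 'I_n -> Lab) (A : 'I_nH -> 'M[R]_(n, dv))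
  (cst : R) (g : 'rV[R]_C -> Lab -> 'rV[R]_C) :
  0 <= cst ->
  (forall z c u,
    0 <= ell (z + u) c - ell z c - \sum_j g z c 0 j * u 0 j /\
    ell (z + u) c - ell z c - \sum_j g z c 0 j * u 0 j <= cst / 2 * \sum_j u 0 j ^+ 2) ->
  forall h i k, grad_head ell W c A h i k =
    \sum_j g (row i (concat A) *m W) (c i) 0 j * W (mxvec_index h k) j.
Proof.
move=> Hc Hg h i k; rewrite /grad_head mxE.
set phi := fun s => loss ell W c (concat (perturb A h i k s)).
set w := row (mxvec_index h k) W.
pose Z := fun t => row t (concat A) *m W.
have sumE s : \sum_t ell (row t (concat (perturb A h i k s)) *m W) (c t) =
    ell (Z i + s *: w) (c i) + \sum_(t | t != i) ell (Z t) (c t).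
  under eq_bigr do rewrite row_pert.
  rewrite (bigD1 i) //= eqxx mulr1; congr (_ + _).
  by apply: eq_bigr => t /negbTE ->; rewrite mulr0 scale0r addr0.
have phiE s : phi s - phi 0 = n%:R^-1 * (ell (Z i + s *: w) (c i) - ell (Z i) (c i)).
  rewrite /phi /loss !sumE scale0r addr0; ring.
set a := \sum_j g (Z i) (c i) 0 j * w 0 j.
have n0 : n%:R != 0 :> R by rewrite pnatr_eq0 -lt0n; apply: leq_ltn_trans (ltn_ord i).
have ni0 : 0 <= n%:R^-1 :> R by rewrite invr_ge0.
have -> : derive1 phi 0 = n%:R^-1 * a.
  apply: (@deriv_sq _ _ (n%:R^-1 * (cst / 2 * \sum_j w 0 j ^+ 2))).
    by apply: mulr_ge0 => //; apply: mulr_ge0; [lra|exact: sumsq_ge0].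
  move=> s; rewrite phiE.
  have [H1 H2] := Hg (Z i) (c i) (s *: w).
  have ga : \sum_j g (Z i) (c i) 0 j * (s *: w) 0 j = s * a.
    rewrite /a mulr_sumr; apply: eq_bigr => j _; rewrite mxE; ring.
  have wa : \sum_j (s *: w) 0 j ^+ 2 = s ^+ 2 * \sum_j w 0 j ^+ 2.
    rewrite mulr_sumr; apply: eq_bigr => j _; rewrite mxE; ring.
  rewrite ga wa in H1 H2.
  have -> : n%:R^-1 * (ell (Z i + s *: w) (c i) - ell (Z i) (c i)) - s * (n%:R^-1 * a)
     = n%:R^-1 * (ell (Z i + s *: w) (c i) - ell (Z i) (c i) - s * a) by ring.
  rewrite normrM ger0_norm // ger0_norm //.
  have -> : n%:R^-1 * (cst / 2 * \sum_j w 0 j ^+ 2) * s ^+ 2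
    = n%:R^-1 * (cst / 2 * (s ^+ 2 * \sum_j w 0 j ^+ 2)) by ring.
  exact: ler_wpM2l.
rewrite mulrA mulfV // mul1r /a.
by apply: eq_bigr => j _; rewrite mxE.
Qed.

Lemma pointwise (n nH dv C : nat) (Lab : Type) (ell : 'rV[R]_C -> Lab -> R)
  (W : 'M[R]_(nH * dv, C)) (c : 'I_n -> Lab) (A : 'I_nH -> 'M[R]_(n, dv))
  (m : 'I_nH -> bool) (cst : R) (g : 'rV[R]_C -> Lab -> 'rV[R]_C) :
  0 <= cst ->
  (forall z c u,
    0 <= ell (z + u) c - ell z c - \sum_j g z c 0 j * u 0 j /\
    ell (z + u) c - ell z c - \sum_j g z c 0 j * u 0 j <= cst / 2 * \sum_j u 0 j ^+ 2) ->
  loss ell W c (concat_mask m A) - loss ell W c (concat A) <=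
  \sum_h (1 - (m h)%:R) * `| frob_inner (grad_head ell W c A h) (A h) |
  + cst / 2 * specnorm W ^+ 2 * \sum_h (1 - (m h)%:R) * frob_norm2 (A h).
Proof.
move=> Hc Hg.
pose Z := fun t => row t (concat A) *m W.
pose v := fun t => row t (concat_mask m A) - row t (concat A).
pose U := fun t => v t *m W.
pose bm := fun h => 1 - (m h)%:R : R.
have bm0 h : 0 <= bm h by rewrite /bm; case: (m h) => /=; lra.
have bm2 h : bm h ^+ 2 = bm h by rewrite /bm; case: (m h) => /=; ring.
have ZU t : Z t + U t = row t (concat_mask m A) *m W by rewrite /U /Z /v mulmxBl addrC subrK.
have vE t h k : v t 0 (mxvec_index h k) = - bm h * A h t k.
  rewrite /v !mxE !mxvecE !mxE /bm /=; ring.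
have ni0 : 0 <= n%:R^-1 :> R by rewrite invr_ge0.
pose GA := fun h => frob_inner (grad_head ell W c A h) (A h).
have lin t : \sum_j g (Z t) (c t) 0 j * U t 0 j =
    \sum_h - bm h * \sum_k grad_head ell W c A h t k * A h t k.
  under eq_bigr do rewrite /U mxE sum_mxvec mulr_sumr.
  rewrite exchange_big /=; apply: eq_bigr => h _.
  under eq_bigr do rewrite mulr_sumr.
  rewrite exchange_big /= mulr_sumr; apply: eq_bigr => k _.
  rewrite (grad_val _ _ _ Hc Hg) mulr_suml mulr_sumr; apply: eq_bigr => j _.
  rewrite vE -/(Z t); ring.
have linsum : n%:R^-1 * \sum_t \sum_j g (Z t) (c t) 0 j * U t 0 j = - \sum_h bm h * GA h.
  under eq_bigr do rewrite lin.
  rewrite exchange_big /= mulr_sumr -sumrN; apply: eq_bigr => h _.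
  rewrite /GA /frob_inner -mulr_sumr; ring.
have quad t : \sum_j U t 0 j ^+ 2 <= specnorm W ^+ 2 *
    \sum_h bm h * \sum_k A h t k ^+ 2.
  apply: le_trans (specnorm_sq W (v t)) _.
  rewrite sum_mxvec le_eqVlt; apply/orP; left; apply/eqP; congr (_ * _).
  apply: eq_bigr => h _; rewrite mulr_sumr; apply: eq_bigr => k _.
  by rewrite vE exprMn sqrrN bm2.
have quadsum : n%:R^-1 * \sum_t (cst / 2 * (specnorm W ^+ 2 *
    \sum_h bm h * \sum_k A h t k ^+ 2)) = cst / 2 * specnorm W ^+ 2 * \sum_h bm h * frob_norm2 (A h).
  under eq_bigr do rewrite mulr_sumr mulr_sumr.
  rewrite exchange_big /= !mulr_sumr; apply: eq_bigr => h _.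
  rewrite /frob_norm2 /frob_inner.
  under [in RHS]eq_bigr do under eq_bigr do rewrite -expr2.
  rewrite -!mulr_sumr; ring.
have step : loss ell W c (concat_mask m A) - loss ell W c (concat A) <=
   n%:R^-1 * \sum_t (\sum_j g (Z t) (c t) 0 j * U t 0 j +
      cst / 2 * (specnorm W ^+ 2 * \sum_h bm h * \sum_k A h t k ^+ 2)).
  rewrite /loss -mulrBr -sumrB; apply: ler_wpM2l => //; apply: ler_sum => t _.
  rewrite -ZU -/(Z t).
  have [_ H2] := Hg (Z t) (c t) (U t).
  have H3 := ler_wpM2l (ltac:(lra) : 0 <= cst / 2) (quad t).
  lra.
apply: le_trans step _.
rewrite big_split /= mulrDr linsum quadsum lerD2r -sumrN.
apply: ler_sum => h _; rewrite -mulrN; apply: ler_wpM2l => //.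
by rewrite -normrN ler_norm.
Qed.
End Lin.

Unset Implicit Arguments. Set Strict Implicit.

Lemma int_scale (R : realType) (dsp : measure_display) (X : measurableType dsp)
  (P : probability X R) (a : R) (f : X -> R) :
  P.-integrable setT (EFin \o f) -> P.-integrable setT (EFin \o (fun x => a * f x)).
Proof.
move=> H; apply: (eq_integrable measurableT _ _ _ (integrableZl measurableT a H)) => x _.
by rewrite /= EFinM.
Qed.

Lemma int_sum (R : realType) (dsp : measure_display) (X : measurableType dsp)
  (P : probability X R) (I : Type) (s : seq I) (f : I -> X -> R) :
  (forall i, P.-integrable setT (EFin \o f i)) ->
  P.-integrable setT (EFin \o (fun x => \sum_(i <- s) f i x)).
Proof.
move=> H.
apply: (eq_integrable measurableT _ _ _ (integrable_sum measurableT (P := xpredT) (h := fun i x => (f i x)%:E) s (fun i _ => H i))) => x _.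
by rewrite /= sumEFin.
Qed.

Lemma Rint_sum (R : realType) (dsp : measure_display) (X : measurableType dsp)
  (P : probability X R) (I : Type) (s : seq I) (f : I -> X -> R) :
  (forall i, P.-integrable setT (EFin \o f i)) ->
  Rintegral P setT (fun x => \sum_(i <- s) f i x) = \sum_(i <- s) Rintegral P setT (f i).
Proof.
move=> H; elim: s => [|i s ih].
  under eq_Rintegral do rewrite big_nil.
  by rewrite big_nil Rintegral_cst // mul0r.
under eq_Rintegral do rewrite big_cons.
rewrite RintegralD //; first by rewrite ih big_cons.
exact: int_sum.
Qed.

Theorem mainTheorem4 (R : realType) (dsp : measure_display) (X : measurableType dsp)
  (P : probability X R) (n nH dv C : nat) (Lab : Type)
  (ell : 'rV[R]_C -> Lab -> R) (cst : R) (Hell : xent_loss ell cst)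
  (W : 'M[R]_(nH * dv, C)) (lab : X -> 'I_n -> Lab)
  (A : X -> 'I_nH -> 'M[R]_(n, dv)) (m : 'I_nH -> bool) :
  P.-integrable setT (fun x => (loss ell W (lab x) (concat (A x)))%:E) ->
  P.-integrable setT (fun x => (loss ell W (lab x) (concat_mask m (A x)))%:E) ->
  (forall h, P.-integrable setT
     (fun x => (`| frob_inner (grad_head ell W (lab x) (A x) h) (A x h) |)%:E)) ->
  (forall h, P.-integrable setT (fun x => (frob_norm2 (A x h))%:E)) ->
  Rintegral P setT (fun x => loss ell W (lab x) (concat_mask m (A x))
                             - loss ell W (lab x) (concat (A x)))
  <= \sum_(h < nH) (1 - (m h)%:R) *
        Rintegral P setT
          (fun x => `| frob_inner (grad_head ell W (lab x) (A x) h) (A x h) |)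
     + cst / 2 * specnorm W ^+ 2 *
       \sum_(h < nH) (1 - (m h)%:R) * Rintegral P setT (fun x => frob_norm2 (A x h)).
Proof.
move=> I1 I2 I3 I4.
have [Hc [g Hg]] := xent_smooth Hell.
pose GA := fun h x => `| frob_inner (grad_head ell W (lab x) (A x) h) (A x h) |.
pose FR := fun h x => frob_norm2 (A x h).
pose K := cst / 2 * specnorm W ^+ 2.
pose F2 := fun x => \sum_(h < nH) (1 - (m h)%:R) * GA h x + K * \sum_(h < nH) (1 - (m h)%:R) * FR h x.
have iGA : P.-integrable setT (EFin \o (fun x => \sum_(h < nH) (1 - (m h)%:R) * GA h x)).
  by apply: int_sum => h; apply: int_scale; exact: I3.
have iFR' : P.-integrable setT (EFin \o (fun x => \sum_(h < nH) (1 - (m h)%:R) * FR h x)).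
  by apply: int_sum => h; apply: int_scale; exact: I4.
have iFR : P.-integrable setT (EFin \o (fun x => K * \sum_(h < nH) (1 - (m h)%:R) * FR h x)).
  exact: int_scale.
have iF1 : P.-integrable setT (EFin \o (fun x => loss ell W (lab x) (concat_mask m (A x))
                             - loss ell W (lab x) (concat (A x)))).
  apply: (eq_integrable measurableT _ _ _ (integrableB measurableT I2 I1)) => x _.
  by rewrite /= EFinB.
have iF2 : P.-integrable setT (EFin \o F2).
  apply: (eq_integrable measurableT _ _ _ (integrableD measurableT iGA iFR)) => x _.
  by rewrite /= EFinD.
apply: le_trans (le_Rintegral measurableT iF1 iF2 _) _.
  move=> x _; exact: (@pointwise R n nH dv C Lab ell W (lab x) (A x) m cst g Hc Hg).
rewrite /F2 RintegralD // RintegralZl // !Rint_sum.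
- rewrite -/K le_eqVlt; apply/orP; left; apply/eqP; congr (_ + _ * _).
  + by apply: eq_bigr => h _; rewrite RintegralZl //; exact: I3.
  + by apply: eq_bigr => h _; rewrite RintegralZl //; exact: I4.
- by move=> h; apply: int_scale; exact: I4.
- by move=> h; apply: int_scale; exact: I3.
Qed.
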